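(* Let $N\ge 1$ and $M\ge 1$ be integers and let $\mathcal{N}=(p_1,\ldots,p_N)$ with $p_i>0$ and $\sum_{i=1}^N p_i=1$. Let $X_1,\ldots,X_M$ be independent random variables with values in $\bar N=\{1,\ldots,N\}$ and $\Pr(X_j=i)=p_i$, and let $\Pr(K\mid M,\mathcal{N})$ be the probability that exactly $K$ distinct values occur among $X_1,\ldots,X_M$. For $s\subseteq\bar N$ write $\Pr(s)=\sum_{i\in s}p_i$. Then for every real $t$, \[ \sum_{K=1}^{N}e^{Kt}\Pr(K\mid M,\mathcal{N})=\sum_{k=1}^{N}\ \sum_{\{s\subseteq\bar N:\ |s|=k\}}\Pr(s)^M\, e^{kt}\,(1-e^{t})^{N-k}. \]
   Context: The left-hand side is the moment-generating function of the type-token distribution $\Pr(K\mid M,\mathcal{N})$, $K=1,\ldots,N$. *)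

(* Defs.v *)
From HB Require Import structures.
From mathcomp Require Import all_boot all_order all_algebra.
From mathcomp Require Import all_classical all_reals all_analysis.
Set Implicit Arguments. Unset Strict Implicit. Unset Printing Implicit Defensive.
Import Order.TTheory GRing.Theory Num.Theory.
Local Open Scope ring_scope.

(* The index set {1,...,N} is modelled by 'I_N = {0,...,N-1}.
   X = (X_1,...,X_M) i.i.d. with law p is the product distribution on the
   finite sample space {ffun 'I_M -> 'I_N}: Pr(X = x) = \prod_j p (x j). *)
Definition sample_prob (R : ringType) (N M : nat) (p : 'I_N -> R)
  (x : {ffun 'I_M -> 'I_N}) : R := \prod_(j < M) p (x j).

Definition n_distinct (N M : nat) (x : {ffun 'I_M -> 'I_N}) : nat :=
  #|[set x j | j : 'I_M]|.

Definition type_token_prob (R : ringType) (N M : nat) (p : 'I_N -> R) (K : nat) : R :=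
  \sum_(x : {ffun 'I_M -> 'I_N} | n_distinct x == K) sample_prob p x.

Definition set_prob (R : ringType) (N : nat) (p : 'I_N -> R) (s : {set 'I_N}) : R :=
  \sum_(i in s) p i.
Arguments type_token_prob {R} N M p K.

(* Main.v *)
From HB Require Import structures.
From mathcomp Require Import all_boot all_order all_algebra.
From mathcomp Require Import all_classical all_reals all_analysis ring.
Require Import Defs.
Import Order.TTheory GRing.Theory Num.Theory.
Local Open Scope ring_scope.

Lemma sum_sets_prod (R : comRingType) n (g : 'I_n -> bool -> R) :
  \sum_(s : {set 'I_n}) \prod_i g i (i \in s) = \prod_i (g i true + g i false).
Proof.
have e : forall i, g i true + g i false = \sum_(b : bool) g i b.
  by move=> i; rewrite big_bool /= addrC.
rewrite (eq_bigr _ (fun i _ => e i)) bigA_distr_bigA /=.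
rewrite (reindex (fun f : {ffun 'I_n -> bool} => [set i | f i])) /=.
  by apply: eq_bigr => f _; apply: eq_bigr => i _; rewrite inE.
exists (fun s : {set 'I_n} => [ffun i => i \in s]) => f _.
  by apply/ffunP => i; rewrite ffunE inE.
by apply/setP => i; rewrite inE ffunE.
Qed.

Lemma key (R : comRingType) n (T : {set 'I_n}) (y : R) :
  \sum_(s : {set 'I_n}) (T \subset s)%:R * (y ^+ #|s| * (1 - y) ^+ (n - #|s|))
  = y ^+ #|T|.
Proof.
pose g i (b : bool) := if b then y else if i \in T then 0 else 1 - y.
transitivity (\sum_(s : {set 'I_n}) \prod_i g i (i \in s)).
  apply: eq_bigr => s _.
  rewrite (bigID (fun i => i \in s)) /=.
  rewrite (eq_bigr (fun _ => y)); last by move=> i ->.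
  rewrite prodr_const.
  have cC : #|[pred i | i \notin s]| = (n - #|s|)%N.
    have -> : #|[pred i | i \notin s]| = #|[predC s]|.
      by apply: eq_card => i; rewrite !inE.
    have := cardC (mem s); rewrite card_ord.
    move: #|s| #|[predC s]| => a b E; rewrite -E addKn //.
  case: (boolP (T \subset s)) => Ts.
    rewrite mul1r (eq_bigr (fun _ => 1 - y)); last first.
      move=> i /negbTE is_; rewrite /g is_.
      case: ifP => // iT; by rewrite (fintype.subsetP Ts _ iT) in is_.
    rewrite prodr_const -cC; congr (_ * _ ^+ _); last first.
  rewrite mul0r.
  have [i iT ins] : exists2 i, i \in T & i \notin s.
    apply/exists_inP; move: Ts; apply: contraR; rewrite negb_exists_in => /forall_inP H.
    by apply/fintype.subsetP => i /H; rewrite negbK.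
  by rewrite (bigD1 i) //= /g (negbTE ins) iT mul0r mulr0.
rewrite sum_sets_prod (bigID (fun i => i \in T)) /=.
rewrite (eq_bigr (fun _ => y)); last by move=> i iT; rewrite /g iT addr0.
rewrite prodr_const big1 ?mulr1 //.
by move=> i /negbTE iT; rewrite iT addrC subrK.
Qed.

Lemma part (R : zmodType) (T : finType) (f : T -> nat) (F : T -> R) N :
  (forall x, ~~ (1 <= f x <= N)%N -> F x = 0) ->
  \sum_(1 <= K < N.+1) \sum_(x | f x == K) F x = \sum_x F x.
Proof.
move=> hF.
under eq_bigr do rewrite big_mkcond.
rewrite exchange_big /=; apply: eq_bigr => x _.
case: (boolP (1 <= f x <= N)%N) => H.
  rewrite (bigD1_seq (f x)) /= ?mem_index_iota ?iota_uniq ?ltnS //.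
  rewrite eqxx big1 ?addr0 // => K /negbTE; rewrite eq_sym => -> //.
by rewrite hF // big1 // => K _; case: ifP.
Qed.

Lemma pow_prob (R : comRingType) N M (p : 'I_N -> R) (s : {set 'I_N}) :
  set_prob p s ^+ M =
  \sum_(x : {ffun 'I_M -> 'I_N}) ([set x j | j : 'I_M] \subset s)%:R * sample_prob p x.
Proof.
rewrite /set_prob big_mkcond /= -[in LHS](card_ord M) -prodr_const bigA_distr_bigA.
apply: eq_bigr => x _; rewrite /sample_prob.
case: (boolP ([set x j | j : 'I_M] \subset s)) => H.
  rewrite mul1r; apply: eq_bigr => j _; rewrite ifT //.
  by apply: (fintype.subsetP H); apply: imset_f.
have [j nj] : exists j, x j \notin s.
  apply/existsP; move: H; apply: contraR; rewrite negb_exists => /forallP Hj.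
  by apply/fintype.subsetP => _ /imsetP [j _ ->]; have := Hj j; rewrite negbK.
by rewrite (bigD1 j) //= ifN // mul0r (_ : false%:R = 0) // mul0r.
Qed.

Theorem lemma1 (R : realType) (N M : nat) (p : 'I_N -> R)
  (hN : (1 <= N)%N) (hM : (1 <= M)%N)
  (hpos : forall i, 0 < p i) (hsum : \sum_(i < N) p i = 1) (t : R) :
  \sum_(1 <= K < N.+1) expR (K%:R * t) * type_token_prob N M p K =
  \sum_(1 <= k < N.+1)
     \sum_(s : {set 'I_N} | #|s| == k)
        set_prob (R:=R) p s ^+ M * expR (k%:R * t) * (1 - expR t) ^+ (N - k).
Proof.
set y := expR t.
rewrite /type_token_prob.
transitivity (\sum_(1 <= K < N.+1) \sum_(x : {ffun 'I_M -> 'I_N} | n_distinct x == K)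
   y ^+ n_distinct x * sample_prob p x).
  apply: eq_bigr => K _; rewrite expRM_natl big_distrr /=.
  by apply: eq_bigr => x /eqP ->.
transitivity (\sum_(1 <= k < N.+1) \sum_(s : {set 'I_N} | #|s| == k)
        set_prob p s ^+ M * y ^+ #|s| * (1 - y) ^+ (N - #|s|)); last first.
  apply: eq_bigr => k _; apply: eq_bigr => s /eqP ->.
  by rewrite expRM_natl.
rewrite part; last first.
  move=> x; rewrite /n_distinct.
  have := max_card (mem [set x j | j : 'I_M]); rewrite card_ord => ->.
  rewrite andbT card_gt0 => /negP []; apply/set0Pn.
  by exists (x (Ordinal hM)); apply: imset_f.
rewrite part; last first.
  move=> s; have := max_card (mem s); rewrite card_ord => ->.
  rewrite andbT -ltnNge ltnS leqn0 cards_eq0 => /eqP ->.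
  rewrite /set_prob big_set0 expr0n.
  have -> : (M == 0)%N = false by case: M hM.
  by rewrite !mul0r.
rewrite [RHS](eq_bigr (fun s : {set 'I_N} => \sum_(x : {ffun 'I_M -> 'I_N})
   ([set x j | j : 'I_M] \subset s)%:R * sample_prob p x * y ^+ #|s| * (1 - y) ^+ (N - #|s|))); last first.
  by move=> s _; rewrite pow_prob !big_distrl.
rewrite exchange_big /=; apply: eq_bigr => x _.
rewrite /n_distinct -(@key R N [set x j | j : 'I_M] y) big_distrl /=.
by apply: eq_bigr => s _; ring.
Qed.
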